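(* Let $r>\frac{2}{3}$, $D>0$, $\mu\in\mathbb{R}$ and $c<u_b(r)$ be fixed, where $u_b(r)$ is defined in the context. Consider the system $$\dot q=s,\qquad \dot s=\frac{1}{D}\big((u+\mu)s-f(q,u;r)\big),\qquad \dot u=\frac{\epsilon}{u-c}\,g(q,u)$$ with $f(q,u;r)=q\big(r+u-2-(r+0.1)(q-1)^2\big)$ and $g(q,u)=2-u+2q(1-u)$. Then the equilibria $X_1=(0,0,2)$ and $X_2=(q_{b,+}(r),0,u_b(r))$ of this system are hyperbolic for all $\epsilon>0$ sufficiently small.
   Context: This is the traveling-wave ODE (with $\dot{}=d/d\xi$, $\xi=x-ct$) of the Barkley pipe-flow model $q_t=Dq_{xx}+(\zeta-u)q_x+f(q,u;r)$, $u_t=-uu_x+\epsilon g(q,u)$, with $\mu=-(\zeta+c)$. For $r>\frac23$, $u_b(r)\in(\frac65,\frac43)$ denotes the unique value of $u$ in $(\frac65,\frac43)$ such that, with $q_{b,+}(r)=1+\sqrt{\frac{r+u_b(r)-2}{r+0.1}}>1$, one has $g(q_{b,+}(r),u_b(r))=0$; then $X_2=(q_{b,+}(r),0,u_b(r))$ is an equilibrium (the ''turbulent'' state) and $X_1=(0,0,2)$ is the ''laminar'' equilibrium. *)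

(* Defs.v *)
From HB Require Import structures.
From mathcomp Require Import all_boot all_order all_algebra.
From mathcomp Require Import all_classical all_reals all_analysis.
From mathcomp Require Import complex.
Set Implicit Arguments. Unset Strict Implicit. Unset Printing Implicit Defensive.
Import Order.TTheory GRing.Theory Num.Theory.
Import numFieldNormedType.Exports.
Local Open Scope ring_scope.

Section Barkley.
Variable R : realType.

Definition fB (r q u : R) : R := q * (r + u - 2 - (r + 1/10) * (q - 1) ^+ 2).
Definition gB (q u : R) : R := 2 - u + 2 * q * (1 - u).

(* q_{b,+}(r) as a function of the value ub = u_b(r) *)
Definition qbplus (r ub : R) : R := 1 + Num.sqrt ((r + ub - 2) / (r + 1/10)).

(* the characterization of u_b(r) from the context *)
Definition is_ub (r ub : R) : Prop :=
  6/5 < ub < 4/3 /\ gB (qbplus r ub) ub = 0.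

(* state X = (q, s, u) as a row vector: X 0 0 = q, X 0 1 = s, X 0 2 = u *)
Definition vfield (D mu c eps r : R) (X : 'rV[R]_3) : 'rV[R]_3 :=
  let q := X ord0 0 in let s := X ord0 1 in let u := X ord0 2 in
  \row_(i < 3)
    (if i == 0 :> nat then s
     else if i == 1 :> nat then D^-1 * ((u + mu) * s - fB r q u)
     else eps / (u - c) * gB q u).

Definition hyperbolic_equilibrium (F : 'rV[R]_3 -> 'rV[R]_3) (X : 'rV[R]_3) : Prop :=
  F X = 0 /\ differentiable F X /\
  forall w : R,
    \det (map_mx (fun x : R => (x%:C)%C) ('J F X) - (0 +i* w)%C%:M) != 0.

Definition X1 : 'rV[R]_3 := \row_(i < 3) (if i == 2 :> nat then 2 else 0).
Definition X2 (r ub : R) : 'rV[R]_3 :=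
  \row_(i < 3) (if i == 0 :> nat then qbplus r ub
                else if i == 1 :> nat then 0 else ub).

End Barkley.

(* Main.v *)
Require Import Defs.
From HB Require Import structures.
From mathcomp Require Import all_boot all_order all_algebra.
From mathcomp Require Import all_classical all_reals all_analysis.
From mathcomp Require Import complex ring lra.
Import Order.TTheory GRing.Theory Num.Theory.
Import numFieldNormedType.Exports.
Local Open Scope ring_scope.

Lemma det3f (F : comRingType) (f : nat -> nat -> F) :
  \det (\matrix_(i < 3, j < 3) f i j) =
  f 0 0 * (f 1 1 * f 2 2 - f 1 2 * f 2 1)
  - f 0 1 * (f 1 0 * f 2 2 - f 1 2 * f 2 0)
  + f 0 2 * (f 1 0 * f 2 1 - f 1 1 * f 2 0).
Proof.
rewrite (expand_det_row _ 0) !big_ord_recl big_ord0 /cofactor.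
rewrite !(expand_det_row _ 0) !big_ord_recl !big_ord0 /cofactor !det_mx11 !mxE /=.
rewrite !expr0 !expr1 /=; ring.
Qed.

Lemma det3 (F : comRingType) (M : 'M[F]_3) : \det M =
  M 0 0 * (M 1 1 * M 2 2 - M 1 2 * M 2 1)
  - M 0 1 * (M 1 0 * M 2 2 - M 1 2 * M 2 0)
  + M 0 2 * (M 1 0 * M 2 1 - M 1 1 * M 2 0).
Proof.
rewrite {1}(_ : M = \matrix_(i < 3, j < 3) M (inord i) (inord j)); last first.
  by apply/matrixP => i j; rewrite mxE !inord_val.
rewrite (@det3f _ (fun a b => M (inord a) (inord b))).
have E0 : inord 0 = 0 :> 'I_3 by apply/val_inj; rewrite /= inordK.
have E1 : inord 1 = 1 :> 'I_3 by apply/val_inj; rewrite /= inordK.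
have E2 : inord 2 = 2 :> 'I_3 by apply/val_inj; rewrite /= inordK.
by rewrite E0 E1 E2.
Qed.

Local Open Scope complex_scope.
Lemma detC3 (R : realFieldType) (A : 'M[R]_3) (w : R) :
  let d := \det A in
  let t := A 0 0 + A 1 1 + A 2 2 in
  let m := (A 0 0 * A 1 1 - A 0 1 * A 1 0) + (A 0 0 * A 2 2 - A 0 2 * A 2 0)
         + (A 1 1 * A 2 2 - A 1 2 * A 2 1) in
  \det (map_mx (fun x : R => x%:C) A - (0 +i* w)%:M) =
    (d - t * w ^+ 2) +i* (w ^+ 3 - m * w).
Proof.
move=> d t m; rewrite /d /t /m !det3 !mxE /=.
rewrite ?mulr1n ?mulr0n ?subr0.
have cE : forall a : R, a%:C = a +i* 0 by [].
have sE : forall a b c e : R, (a +i* b) - (c +i* e) = (a - c) +i* (b - e) by [].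
have aE : forall a b c e : R, (a +i* b) + (c +i* e) = (a + c) +i* (b + e) by [].
have mE : forall a b c e : R, (a +i* b) * (c +i* e) = (a * c - b * e) +i* (a * e + b * c) by [].
rewrite !cE. set LL := (X in X = _). have -> : LL = _ +i* _ := erefl.
congr (_ +i* _); ring.
Qed.

Local Close Scope complex_scope.
Lemma cnz (R : realFieldType) (P Q : R) : ~ (P = 0 /\ Q = 0) -> (P +i* Q)%C != 0.
Proof. by move=> H; apply/eqP => E; apply: H; case: E. Qed.

Lemma alg1 (R : realFieldType) (A B k w : R) : 0 < A -> 0 < k ->
  A * k - (B - k) * w ^+ 2 = 0 -> w ^+ 3 + (A + B * k) * w = 0 -> False.
Proof.
move=> hA hk hP hQ.
have hAk : 0 < A * k by apply: mulr_gt0.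
have [w0|wn0] := eqVneq w 0.
  by move: hP; rewrite w0 expr0n /= mulr0 subr0 => hP; lra.
have hw2 : w ^+ 2 = - A - B * k.
  have : w * (w ^+ 2 + (A + B * k)) = 0 by rewrite -[RHS]hQ; ring.
  by move/eqP; rewrite mulf_eq0 (negbTE wn0) /= => /eqP h; lra.
rewrite hw2 in hP.
have hw := sqr_ge0 w.
have [B0|Bn0] := eqVneq B 0.
  by move: hw2; rewrite B0 mul0r subr0 => hw2; lra.
have : B * (A + B * k - k ^+ 2) = 0 by rewrite -[RHS]hP; ring.
move/eqP; rewrite mulf_eq0 (negbTE Bn0) /= => /eqP h.
have hk2 : 0 < k ^+ 2 by apply: exprn_gt0.
have : w ^+ 2 = - k ^+ 2 by rewrite hw2; lra.
lra.
Qed.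

Lemma alg2 (R : realFieldType) (A B k H G C w : R) : 0 < A -> 0 < k -> H < 0 -> G < 0 -> 0 < C ->
  k * `|B * H| < A ->
  (- (A * (k * H)) - k * G * C) - (B + k * H) * w ^+ 2 = 0 ->
  w ^+ 3 - (- A + B * (k * H)) * w = 0 -> False.
Proof.
move=> hA hk hH hG hC hsm hP hQ.
have h1 : 0 < - (A * (k * H)).
  by rewrite oppr_gt0 pmulr_rlt0 // pmulr_rlt0.
have h2 : 0 < - (k * G * C).
  by rewrite oppr_gt0 pmulr_llt0 // pmulr_rlt0.
have [w0|wn0] := eqVneq w 0.
  by move: hP; rewrite w0 expr0n /= mulr0 subr0 => hP; lra.
have hw2 : w ^+ 2 = - A + B * (k * H).
  have : w * (w ^+ 2 - (- A + B * (k * H))) = 0 by rewrite -[RHS]hQ; ring.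
  by move/eqP; rewrite mulf_eq0 (negbTE wn0) /= => /eqP h; lra.
have hb : B * (k * H) <= k * `|B * H|.
  rewrite mulrCA; apply: ler_wpM2l; [exact: ltW | exact: ler_norm].
have hw := sqr_ge0 w.
lra.
Qed.

Section S.
Variable R : realType.
Definition cf (k : 'I_3) : 'rV[R]_3 -> R := fun N => N ord0 k.

Global Instance is_diff_cf k (x : 'rV[R]_3) : is_diff x (cf k) (cf k).
Proof.
have @f : {linear 'rV[R]_3 -> R}.
  by exists (fun N : 'rV[R]_3 => N ord0 k); do 2![eexists]; do ?[constructor];
     rewrite ?mxE// => ? *; rewrite ?mxE//; move=> ?; rewrite !mxE.
have -> : cf k = f by [].
apply: DiffDef; first exact/linear_differentiable/coord_continuous.
by rewrite diff_lin //; apply: coord_continuous.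
Qed.

Lemma is_diffV' (f df : 'rV[R]_3 -> R) x : is_diff x f df -> f x != 0 ->
  is_diff x (fun y => (f y)^-1) (- (f x) ^- 2 *: df).
Proof.
move=> H fx; apply: DiffDef; first exact: differentiableV.
by rewrite diffV // diff_val.
Qed.

Global Instance is_diffZl' (k dk : 'rV[R]_3 -> R) (e : 'rV[R]_3) x :
  is_diff x k dk -> is_diff x (fun z => k z *: e) (fun z => dk z *: e).
Proof.
move=> H; apply: DiffDef; first exact: differentiableZl.
by rewrite diffZl // diff_val.
Qed.

Definition e3 (k : 'I_3) : 'rV[R]_3 := delta_mx 0 k.

Variables (D mu c eps r : R).

Definition f0 : 'rV[R]_3 -> R := cf 1.
Definition f1 : 'rV[R]_3 -> R := cst (D^-1) * ((cf 2 + cst mu) * cf 1 - cf 0 *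
   (cst r + cf 2 - cst 2 - cst (r + 1/10) * (cf 0 - cst 1) ^+ 2)).
Definition f2 : 'rV[R]_3 -> R := cst eps * (fun y => (cf 2 y - c)^-1) *
   (cst 2 - cf 2 + cst 2 * cf 0 * (cst 1 - cf 2)).

Lemma vfieldE : vfield D mu c eps r =
  (fun X => f0 X *: e3 0) + (fun X => f1 X *: e3 1) + (fun X => f2 X *: e3 2).
Proof.
apply/funext => X; apply/matrixP => i j; rewrite !mxE (ord1 i) eqxx /=.
case: j => [[|[|[|j]]] Hj] //=; rewrite ?mulr1 ?mulr0 ?addr0 ?add0r.
- by [].
- by rewrite /f1 /fB /=.
- by rewrite /f2 /gB /=.
Qed.

Lemma d_f0 x : is_diff x f0 (cf 1).
Proof. exact: is_diff_cf. Qed.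

Lemma d_f1 (x : 'rV[R]_3) : is_diff x f1 (fun v =>
  D^-1 * (cf 2 v * cf 1 x + (cf 2 x + mu) * cf 1 v
   - (cf 0 v * (r + cf 2 x - 2 - (r + 1/10) * (cf 0 x - 1) ^+ 2)
      + cf 0 x * (cf 2 v - 2 * (r + 1/10) * (cf 0 x - 1) * cf 0 v)))).
Proof.
apply: (is_diff_eq (_ : is_diff x f1 _)).
apply/funext => v; rewrite !fctE /= ?fctE.
have z0 : (0 : 'rV[R]_3 -> R) v = 0 by [].
have sc : forall a b : R, a *: b = a * b by [].
rewrite z0 !sc expr1; ring.
Qed.
Lemma d_f2 (x : 'rV[R]_3) (hx : cf 2 x - c != 0) : is_diff x f2 (fun v =>
  eps * (- (cf 2 x - c) ^- 2 * cf 2 v * gB (cf 0 x) (cf 2 x)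
    + (cf 2 x - c)^-1 * (- cf 2 v + 2 * (cf 0 v * (1 - cf 2 x) - cf 0 x * cf 2 v)))).
Proof.
have Hv := @is_diffV' (cf 2 - cst c) _ x (_ : is_diff x (cf 2 - cst c) _) hx.
apply: (is_diff_eq (_ : is_diff x f2 _)).
apply/funext => v; rewrite !fctE /= ?fctE.
have z0 : (0 : 'rV[R]_3 -> R) v = 0 by [].
have sc : forall a b : R, a *: b = a * b by [].
rewrite z0 !sc /gB; ring.
Qed.
Definition jm (x : 'rV[R]_3) (i j : nat) : R :=
 let q := x ord0 0 in let s := x ord0 1 in let u := x ord0 2 in
 match i, j with
 | 0, 0 => 0
 | 0, 1 => - D^-1 * (r + u - 2 - (r + 1/10) * (q - 1) ^+ 2 - 2 * (r + 1/10) * q * (q - 1))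
 | 0, _ => eps / (u - c) * (2 * (1 - u))
 | 1, 0 => 1
 | 1, 1 => D^-1 * (u + mu)
 | 1, _ => 0
 | _, 0 => 0
 | _, 1 => D^-1 * (s - q)
 | _, _ => eps * (- (u - c) ^- 2 * gB q u + (u - c)^-1 * (-1 - 2 * q))
 end.

Lemma J_vfield (x : 'rV[R]_3) (hx : x ord0 2 - c != 0) :
  differentiable (vfield D mu c eps r) x /\
  'J (vfield D mu c eps r) x = \matrix_(i < 3, j < 3) jm x i j.
Proof.
have HF := is_diffD (is_diffD (@is_diffZl' _ _ (e3 0) _ (d_f0 x)) (@is_diffZl' _ _ (e3 1) _ (d_f1 x)))
   (@is_diffZl' _ _ (e3 2) _ (@d_f2 x hx)).
rewrite vfieldE; split; first exact: ex_diff.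
rewrite /jacobian diff_val; apply/matrixP => i j; rewrite !mxE /cf !mxE eqxx /=.
case: i => [[|[|[|i]]] Hi] //; case: j => [[|[|[|j]]] Hj] //= ; rewrite /jm /=.
all: ring.
Qed.
End S.

Theorem theorem1 (R : realType) (r D mu c ub : R) :
  2/3 < r -> 0 < D -> is_ub r ub -> c < ub ->
  exists eps0 : R, 0 < eps0 /\
    forall eps : R, 0 < eps -> eps < eps0 ->
      hyperbolic_equilibrium (vfield D mu c eps r) (X1 R) /\
      hyperbolic_equilibrium (vfield D mu c eps r) (X2 r ub).
Proof.
move=> hr hD [/andP [hub1 hub2] hg] hc.
set a := r + 1/10.
have ha : 0 < a by rewrite /a; lra.
set sq := Num.sqrt ((r + ub - 2) / a).
have hp : 0 < (r + ub - 2) / a.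
  rewrite ltNge; apply/negP => hle.
  move: hg; rewrite /qbplus -/a -/sq /sq (ler0_sqrtr hle) /gB => /eqP.
  apply/negP; rewrite addr0; apply/eqP; lra.
have hsq : 0 < sq by rewrite sqrtr_gt0.
have hsq2 : sq ^+ 2 = (r + ub - 2) / a by rewrite sqr_sqrtr // ltW.
have H1 : forall eps, 0 < eps -> hyperbolic_equilibrium (vfield D mu c eps r) (X1 R).
  move=> eps he.
  have hx : (X1 R) ord0 2 - c != 0 by rewrite mxE /=; apply: lt0r_neq0; lra.
  have [dif J] := @J_vfield R D mu c eps r _ hx.
  split; [|split=> //].
    by apply/matrixP => i j; rewrite !mxE /=;
    case: j => [[|[|[|j]]] Hj] //=; rewrite ?mxE /= /fB /gB; ring.
  move=> w; rewrite J detC3 det3 !mxE /jm /= !mxE /=.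
  have g0 : gB 0 2 = 0 :> R by rewrite /gB; ring.
  rewrite g0; apply: cnz => -[HP HQ].
  have h2c : 0 < 2 - c by lra.
  apply: (@alg1 R (D^-1 / 10) (D^-1 * (2 + mu)) (eps / (2 - c)) w).
  - by rewrite divr_gt0 // invr_gt0.
  - by rewrite divr_gt0.
  - by rewrite -[RHS]HP; ring.
  - by rewrite -[RHS]HQ; ring.
have hasq : a * sq ^+ 2 = r + ub - 2 by rewrite hsq2 mulrC divfK // lt0r_neq0.
have hqb : qbplus r ub = 1 + sq by [].
have hfB : fB r (qbplus r ub) ub = 0.
  rewrite /fB hqb -/a.
  have -> : 1 + sq - 1 = sq by ring.
  by rewrite hasq subrr mulr0.
have hcu : 0 < ub - c by lra.
set A2 := D^-1 * (2 * a * (1 + sq) * sq).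
set B := D^-1 * (ub + mu).
set H := -1 - 2 * (1 + sq).
set G := 2 * (1 - ub).
set C := D^-1 * (1 + sq).
have hA2 : 0 < A2.
  rewrite /A2 mulr_gt0 ?invr_gt0 // mulr_gt0 // mulr_gt0 //; last lra.
  by rewrite mulr_gt0 //.
have hN : 0 < `|B * H| + 1 by have := normr_ge0 (B * H); lra.
exists (A2 * (ub - c) / (`|B * H| + 1)); split.
  by rewrite divr_gt0 // mulr_gt0.
move=> eps he heps; split; first exact: H1.
have hx : (X2 r ub) ord0 2 - c != 0 by rewrite mxE /=; apply: lt0r_neq0; lra.
have [dif J] := @J_vfield R D mu c eps r _ hx.
split; [|split=> //].
  by apply/matrixP => i j; rewrite !mxE /=;
  case: j => [[|[|[|j]]] Hj] //=; rewrite ?mxE /= ?hfB ?hg; ring.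
move=> w; rewrite J detC3 det3 !mxE /jm /= !mxE /= hg.
apply: cnz => -[HP HQ].
have hk : 0 < eps / (ub - c) by rewrite divr_gt0.
apply: (@alg2 R A2 B (eps / (ub - c)) H G C w hA2 hk).
- rewrite /H; lra.
- rewrite /G; lra.
- by rewrite /C mulr_gt0 ?invr_gt0 //; lra.
- have hk1 : eps / (ub - c) * (`|B * H| + 1) < A2.
    rewrite mulrAC ltr_pdivrMr //.
    by move: heps; rewrite ltr_pdivlMr // mulrAC.
  have := normr_ge0 (B * H).
  move: hk1; rewrite mulrDr mulr1 => hk1 hn; lra.
- rewrite -[RHS]HP -hasq hqb /A2 /B /H /G /C; rewrite /a; ring.
- rewrite -[RHS]HQ -hasq hqb /A2 /B /H /G /C; rewrite /a; ring.
Qed.
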